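(* Let $S$ be an $E$-solid locally inverse semigroup and $\rho$ an inverse semigroup congruence on $S$ such that each idempotent $\rho$-class (i.e. each class $e\rho$ with $e$ an idempotent of $S$), regarded as a subsemigroup of $S$, is a completely simple semigroup. Then there exist a completely simple semigroup $K$ and an action of the inverse semigroup $T=S/\rho$ on $K$ by endomorphisms on the left such that the extension $(S,\rho)$ can be embedded into the $\lambda$-semidirect product extension $(K\rtimes_\lambda T,\vartheta_2)$; that is, there is an injective homomorphism $\psi\colon S\to K\rtimes_\lambda T$ such that the congruence on $S$ induced by $\psi\vartheta_2^\natural$ (equivalently, by $\psi$ followed by the second projection onto $T$) is exactly $\rho$.
   Context: A semigroup is locally inverse if it is regular and every local submonoid $eSe$ ($e$ idempotent) is an inverse semigroup. A semigroup is $E$-solid if the subsemigroup generated by its idempotents is completely regular. A congruence $\rho$ on $S$ is an inverse semigroup congruence if $S/\rho$ is an inverse semigroup. An extension by an inverse semigroup is a pair $(S,\rho)$ with $\rho$ an inverse semigroup congruence on $S$. If $(S,\rho)$ and $(U,\sigma)$ are such extensions, an embedding of $(S,\rho)$ into $(U,\sigma)$ is an injective homomorphism $\psi\colon S\to U$ such that the kernel of $\psi\sigma^\natural$ equals $\rho$. Let $K$ be a semigroup and $T$ an inverse semigroup; $T$ acts on $K$ (by endomorphisms on the left) if an antihomomorphism $t\mapsto\varepsilon_t$ from $T$ to the endomorphism monoid of $K$ is given (so $\varepsilon_u\varepsilon_t=\varepsilon_{tu}$, maps written on the right); write ${}^t a$ for $a\varepsilon_t$. The $\lambda$-semidirect product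 $K\rtimes_\lambda T$ is the set $\{(a,t)\in K\times T: {}^{tt^{-1}}a=a\}$ with multiplication $(a,t)(b,u)=({}^{(tu)(tu)^{-1}}a\cdot {}^t b,\ tu)$. The $\lambda$-semidirect product extension of $K$ by $T$ is the pair $(K\rtimes_\lambda T,\vartheta_2)$ where $\vartheta_2$ is the congruence induced by the second projection $(a,t)\mapsto t$. *)

(* Defs.v *)
From Stdlib Require Import ClassicalEpsilon.

Set Implicit Arguments.

Record Semigroup := {
  sg_car :> Type;
  sg_op : sg_car -> sg_car -> sg_car;
  sg_assoc : forall x y z, sg_op x (sg_op y z) = sg_op (sg_op x y) z
}.

Arguments sg_op {s} _ _.
Notation "x * y" := (sg_op x y) (at level 40, left associativity).

Section Basics.
Variable S : Semigroup.

Definition subset := S -> Prop.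

Definition idempotent (e : S) : Prop := e * e = e.

Definition is_inverse (a x : S) : Prop := a * x * a = a /\ x * a * x = x.

Definition closed (A : subset) : Prop :=
  forall x y, A x -> A y -> A (x * y).

Definition regular_sub (A : subset) : Prop :=
  forall a, A a -> exists x, A x /\ a * x * a = a.

Definition inverse_sub (A : subset) : Prop :=
  closed A /\
  forall a, A a -> exists x, A x /\ is_inverse a x /\
                     forall y, A y -> is_inverse a y -> y = x.

Definition whole : subset := fun _ => True.

Definition regular : Prop := regular_sub whole.
Definition inverse_semigroup : Prop := inverse_sub whole.

Definition local_sub (e : S) : subset := fun x => exists s, x = e * s * e.

Definition locally_inverse : Prop :=
  regular /\ forall e, idempotent e -> inverse_sub (local_sub e).

Inductive gen_idem : S -> Prop :=
  | gen_idem_e : forall e, idempotent e -> gen_idem e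
  | gen_idem_mul : forall x y, gen_idem x -> gen_idem y -> gen_idem (x * y).

Definition subgroup (H : subset) : Prop :=
  closed H /\
  exists e, H e /\ (forall h, H h -> e * h = h /\ h * e = h) /\
            (forall h, H h -> exists h', H h' /\ h * h' = e /\ h' * h = e).

Definition completely_regular_sub (A : subset) : Prop :=
  closed A /\
  forall a, A a -> exists H, subgroup H /\ (forall h, H h -> A h) /\ H a.

Definition E_solid : Prop := completely_regular_sub gen_idem.

Definition ideal_sub (A I : subset) : Prop :=
  (forall x, I x -> A x) /\
  (forall a x, A a -> I x -> I (a * x) /\ I (x * a)).

Definition simple_sub (A : subset) : Prop :=
  forall I, ideal_sub A I -> (exists x, I x) -> forall a, A a -> I a.

Definition primitive_idem_sub (A : subset) (f : S) : Prop :=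
  A f /\ idempotent f /\
  forall g, A g -> idempotent g -> g * f = g -> f * g = g -> g = f.

Definition completely_simple_sub (A : subset) : Prop :=
  closed A /\ simple_sub A /\ exists f, primitive_idem_sub A f.

Definition completely_simple : Prop := completely_simple_sub whole.

Definition homomorphism (T : Semigroup) (f : S -> T) : Prop :=
  forall x y, f (x * y) = f x * f y.

Definition congruence (rho : S -> S -> Prop) : Prop :=
  (forall x, rho x x) /\ (forall x y, rho x y -> rho y x) /\
  (forall x y z, rho x y -> rho y z -> rho x z) /\
  (forall x y z, rho x y -> rho (z * x) (z * y) /\ rho (x * z) (y * z)).

(** the inverse of a (meaningful, and unique, in an inverse semigroup) *)
Definition sinv (a : S) : S := epsilon (inhabits a) (is_inverse a).

End Basics.

Arguments whole {S}.
Arguments idempotent {S} e.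
Arguments is_inverse {S} a x.
Arguments congruence {S} rho.
Arguments homomorphism {S T} f.
Arguments completely_simple_sub {S} A.
Arguments sinv {S} a.

(** Left action of T on K by endomorphisms: t |-> eps_t antihomomorphism,
    written act t a = ^t a = a eps_t, so  ^t (^u a) = ^(tu) a. *)
Definition action (T K : Semigroup) (act : T -> K -> K) : Prop :=
  (forall t a b, act t (a * b) = act t a * act t b) /\
  (forall t u a, act t (act u a) = act (t * u) a).

Definition lsd_mem (T K : Semigroup) (act : T -> K -> K) (p : K * T) : Prop :=
  act (snd p * sinv (snd p)) (fst p) = fst p.

Definition lsd_mul (T K : Semigroup) (act : T -> K -> K) (p q : K * T) : K * T :=
  let tu := snd p * snd q in
  (act (tu * sinv tu) (fst p) * act (snd p) (fst q), tu).

Arguments action {T K} act.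
Arguments lsd_mem {T K} act p.
Arguments lsd_mul {T K} act p q.

(* Main.v *)
Require Import Defs.
From Stdlib Require Import Setoid Morphisms ClassicalEpsilon FunctionalExtensionality ProofIrrelevance.
Ltac rnorm := repeat rewrite <- sg_assoc.
Tactic Notation "rnorm" "in" hyp(H) := repeat rewrite <- sg_assoc in H.
Ltac rw H := rnorm;
  let H1 := fresh in pose proof H as H1; repeat rewrite <- sg_assoc in H1;
  let H2 := fresh in
  match type of H1 with ?l = ?r =>
    assert (H2 : forall x, l * x = r * x) by (intro; rewrite H1; reflexivity) end;
  repeat setoid_rewrite <- sg_assoc in H2;
  rewrite ?H2, ?H1; clear H1 H2; rnorm.
Ltac rwb H := let H1 := fresh in pose proof (eq_sym H) as H1; rw H1; clear H1.

Section CSimple.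
Variable S : Semigroup.
Variable A : S -> Prop.
Hypothesis Hcl : forall x y, A x -> A y -> A (x*y).
Hypothesis Hsimple : simple_sub A.
Variable p : S.
Hypothesis Hp : primitive_idem_sub A p.

Ltac mem := repeat apply Hcl; auto.

Lemma pA : A p. Proof. apply Hp. Qed.
Lemma pp : p * p = p. Proof. apply (proj1 (proj2 Hp)). Qed.
Hint Resolve pA : core.

Lemma cs_fact a b : A a -> A b -> exists u v, A u /\ A v /\ b = u * a * v.
Proof.
  intros Ha Hb.
  set (I := fun z => exists u v, A u /\ A v /\ z = u*a*v).
  assert (HI : ideal_sub A I).
  { split.
    - intros z (u&v&Hu&Hv&->). mem.
    - intros c z Hc (u&v&Hu&Hv&->). split.
      + exists (c*u), v. repeat split; mem. rnorm; reflexivity.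
      + exists u, (v*c). repeat split; mem. rnorm; reflexivity. }
  apply (Hsimple I HI); auto. exists (a*a*a), a, a. auto.
Qed.

Lemma cs_rinv z : A z -> p*z*p = z -> exists r, A r /\ p*r*p = r /\ z*r = p.
Proof.
  intros Hz Hzp.
  destruct (cs_fact z p Hz pA) as (m&n&Hm&Hn&Hmn).
  set (al := p*m*p). set (be := p*n*p).
  assert (Hab : al * z * be = p).
  { unfold al, be. rw Hzp. rwb Hmn. rw pp. rw pp. reflexivity. }
  assert (Hpz : p * z = z). { rewrite <- Hzp at 1. rw pp. rnorm in Hzp. exact Hzp. }
  assert (Hzp' : z * p = z). { rewrite <- Hzp at 1. rw pp. rnorm in Hzp. exact Hzp. }
  assert (Hr0 : z * be * al = p).
  { apply (proj2 (proj2 Hp)).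
    - unfold al, be; mem.
    - unfold idempotent. transitivity (z * (be * (al * z * be)) * al).
      + rnorm; reflexivity.
      + rewrite Hab. unfold be. rw pp. reflexivity.
    - unfold al. rw pp. reflexivity.
    - rw Hpz. reflexivity. }
  exists (be * al). repeat split.
  - unfold al, be; mem.
  - unfold al, be. rw pp. reflexivity.
  - rnorm. rnorm in Hr0. exact Hr0.
Qed.

Lemma cs_inv z : A z -> p*z*p = z -> exists r, A r /\ p*r*p = r /\ z*r = p /\ r*z = p.
Proof.
  intros Hz Hzp.
  destruct (cs_rinv z Hz Hzp) as (r&Hr&Hrp&Hzr).
  destruct (cs_rinv r Hr Hrp) as (r'&Hr'&Hr'p&Hrr').
  assert (Hzr' : z = r').
  { assert (Hzp2 : z * p = z) by (rewrite <- Hzp at 1; rw pp; rnorm in Hzp; exact Hzp).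
    transitivity (z * p). { symmetry; exact Hzp2. }
    rewrite <- Hrr'. rewrite sg_assoc, Hzr. rewrite <- Hr'p at 1. rw pp. rnorm in Hr'p. exact Hr'p. }
  subst r'. exists r. auto.
Qed.

Lemma pzp_l z : p*z*p = z -> p*z = z.
Proof. intro Hzp. rewrite <- Hzp at 1. rw pp. rnorm in Hzp. exact Hzp. Qed.
Lemma pzp_r z : p*z*p = z -> z*p = z.
Proof. intro Hzp. rewrite <- Hzp at 1. rw pp. rnorm in Hzp. exact Hzp. Qed.

Lemma cs_decomp c : A c -> exists s t tr sl, A s /\ A t /\ A tr /\ A sl /\
  c = s*p*t /\ s*p = s /\ p*t = t /\ t*tr = p /\ sl*s = p.
Proof.
  intros Hc.
  destruct (cs_fact p c pA Hc) as (s0&t0&Hs0&Ht0&Hc0).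
  destruct (cs_fact c p Hc pA) as (x&y&Hx&Hy&Hp0).
  assert (Hsp : s0*p*p = s0*p) by (rw pp; reflexivity).
  assert (Hpt : p*(p*t0) = p*t0) by (rw pp; reflexivity).
  assert (Hc' : c = s0*p*p*(p*t0)) by (rw pp; rw pp; rnorm in Hc0; exact Hc0).
  set (s := s0*p) in *. set (t := p*t0) in *.
  set (tau := p*t*y*p). set (sig := p*x*s*p).
  assert (Hst : sig * tau = p).
  { unfold sig, tau. rw pp. rwb Hc'. rwb Hp0. rw pp. rw pp. reflexivity. }
  assert (Htp : p*tau*p = tau) by (unfold tau; rw pp; rw pp; reflexivity).
  assert (HtauA : A tau) by (unfold tau, t; mem).
  assert (HsigA : A sig) by (unfold sig, s; mem).
  destruct (cs_inv tau HtauA Htp) as (ti&Hti&Htip&Htti&Htit).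
  assert (Hsig : sig = ti).
  { transitivity (sig * p). { unfold sig. rw pp. reflexivity. }
    rewrite <- Htti. rewrite sg_assoc, Hst. apply pzp_l; exact Htip. }
  rewrite <- Hsig in Htti.
  exists s, t, (y*p*sig), (tau*p*x). repeat split.
  - unfold s; mem.
  - unfold t; mem.
  - mem.
  - mem.
  - exact Hc'.
  - exact Hsp.
  - exact Hpt.
  - rewrite <- Hpt. fold t. transitivity (tau * sig). { unfold tau. rnorm. reflexivity. } exact Htti.
  - rewrite <- Hsp. fold s. transitivity (tau * sig). { unfold sig. rnorm. reflexivity. } exact Htti.
Qed.

Lemma cs_right c d : A c -> A d -> exists z, A z /\ c*d*z = c.
Proof.
  intros Hc Hd.
  destruct (cs_decomp c Hc) as (s&t&tr&sl&Hs&Ht&Htr&Hsl&Hc'&Hsp&Hpt&Httr&Hsls).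
  destruct (cs_decomp d Hd) as (s'&t'&tr'&sl'&Hs'&Ht'&Htr'&Hsl'&Hd'&Hsp'&Hpt'&Httr'&Hsls').
  assert (Hg : p*(p*t*s'*p)*p = p*t*s'*p) by (rw pp; rw pp; reflexivity).
  destruct (cs_inv (p*t*s'*p) ltac:(mem) Hg) as (gi&Hgi&Hgip&Hggi&Hgig).
  exists (tr' * gi * t). split. mem.
  rewrite Hd', Hc'. rw Httr'. rw pp. rw Hggi. reflexivity.
Qed.

Lemma cs_left c d : A c -> A d -> exists z, A z /\ z*d*c = c.
Proof.
  intros Hc Hd.
  destruct (cs_decomp c Hc) as (s&t&tr&sl&Hs&Ht&Htr&Hsl&Hc'&Hsp&Hpt&Httr&Hsls).
  destruct (cs_decomp d Hd) as (s'&t'&tr'&sl'&Hs'&Ht'&Htr'&Hsl'&Hd'&Hsp'&Hpt'&Httr'&Hsls').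
  assert (Hg : p*(p*t'*s*p)*p = p*t'*s*p) by (rw pp; rw pp; reflexivity).
  destruct (cs_inv (p*t'*s*p) ltac:(mem) Hg) as (gi&Hgi&Hgip&Hggi&Hgig).
  exists (s * gi * sl'). split. mem.
  rewrite Hd', Hc'. rw Hsls'. rw pp. rw Hgig. reflexivity.
Qed.

Lemma cs_reg c : A c -> exists t, A t /\ c*t*c = c.
Proof.
  intros Hc.
  destruct (cs_decomp c Hc) as (s&t&tr&sl&Hs&Ht&Htr&Hsl&Hc'&Hsp&Hpt&Httr&Hsls).
  exists (tr*sl). split. mem.
  rewrite Hc'. rw Httr. rw Hsls. rw pp. rw pp. rw pp. reflexivity.
Qed.

Lemma cs_uniq a b : A a -> A b -> (forall z, A z -> a*z = b*z) ->
  (forall z, A z -> z*a = z*b) -> a = b.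
Proof.
  intros Ha Hb Hl Hr.
  destruct (cs_reg a Ha) as (ta&Hta&Haa).
  destruct (cs_reg b Hb) as (tb&Htb&Hbb).
  assert (E1 : a = a*ta*b) by (rewrite <- Hr by mem; symmetry; exact Haa).
  assert (E2 : b = a*(tb*b)) by (rewrite Hl by mem; rewrite sg_assoc; symmetry; exact Hbb).
  rewrite E1 at 1. rewrite E2. rw Haa. rnorm in E2. rewrite <- E2. reflexivity.
Qed.
End CSimple.

Section CSW.
Variable S : Semigroup.
Variable A : S -> Prop.
Hypothesis HA : completely_simple_sub A.
Lemma CS_fact' a b : A a -> A b -> exists u v, A u /\ A v /\ b = u * a * v.
Proof. destruct HA as (Hcl&Hs&p&Hp). apply (cs_fact S A Hcl Hs). Qed.
Lemma CS_right' c d : A c -> A d -> exists z, A z /\ c*d*z = c.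
Proof. destruct HA as (Hcl&Hs&p&Hp). apply (cs_right S A Hcl Hs p Hp). Qed.
Lemma CS_left' c d : A c -> A d -> exists z, A z /\ z*d*c = c.
Proof. destruct HA as (Hcl&Hs&p&Hp). apply (cs_left S A Hcl Hs p Hp). Qed.
Lemma CS_reg' c : A c -> exists t, A t /\ c*t*c = c.
Proof. destruct HA as (Hcl&Hs&p&Hp). apply (cs_reg S A Hcl Hs p Hp). Qed.
Lemma CS_uniq' a b : A a -> A b -> (forall z, A z -> a*z = b*z) ->
  (forall z, A z -> z*a = z*b) -> a = b.
Proof. destruct HA as (Hcl&Hs&p&Hp). apply (cs_uniq S A Hcl Hs p Hp). Qed.
Lemma CS_cl' a b : A a -> A b -> A (a*b).
Proof. destruct HA as (Hcl&_). apply Hcl. Qed.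
End CSW.

Lemma CS_ext (S : Semigroup) (A B : S -> Prop) : completely_simple_sub A ->
  (forall z, A z <-> B z) -> completely_simple_sub B.
Proof.
  intros (Hcl&Hs&p&Hp1&Hp2&Hp3) E. split; [|split].
  - intros x y Hx Hy. apply E. apply Hcl; apply E; auto.
  - intros I [HI1 HI2] Hne a Ha. apply (Hs I); auto.
    split; [intros x Hx; apply E; auto| intros b x Hb Hx; apply HI2; auto; apply E; auto].
    apply E; auto.
  - exists p. split; [apply E; auto| split; auto]. intros g Hg. apply Hp3. apply E; auto.
Qed.

Lemma inv_sub_comm (S : Semigroup) (A : S -> Prop) : inverse_sub A ->
  forall a b, A a -> A b -> idempotent a -> idempotent b -> a*b = b*a.
Proof.
  intros [Hcl Hinv].
  assert (Hid : forall a b, A a -> A b -> idempotent a -> idempotent b -> idempotent (a*b)).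
  { intros a b Ha Hb Hia Hib.
    destruct (Hinv (a*b) (Hcl _ _ Ha Hb)) as (x&Hx&[Hx1 Hx2]&Hu).
    assert (Hbxa : b*x*a = x).
    { apply Hu. apply Hcl; [apply Hcl|]; auto. split.
      - unfold idempotent in *. rnorm. rw Hib. rw Hia. rnorm in Hx1. exact Hx1.
      - unfold idempotent in *. rnorm. rnorm in Hx2. rw Hia. rw Hib. rw Hx2. reflexivity. }
    assert (Hxx : x*x = x).
    { transitivity ((b*x*a)*(b*x*a)). { rewrite Hbxa; reflexivity. }
      rnorm. rnorm in Hx2. rw Hx2. rnorm in Hbxa. exact Hbxa. }
    destruct (Hinv x Hx) as (y&Hy&_&Hu2).
    assert (E1 : a*b = y) by (apply Hu2; [apply Hcl; auto| split; assumption]).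
    assert (E2 : x = y) by (apply Hu2; auto; split; rewrite ?Hxx; auto).
    unfold idempotent. rewrite E1, <- E2. exact Hxx. }
  intros a b Ha Hb Hia Hib.
  pose proof (Hid a b Ha Hb Hia Hib) as Hab. pose proof (Hid b a Hb Ha Hib Hia) as Hba.
  destruct (Hinv (a*b) (Hcl _ _ Ha Hb)) as (x&Hx&_&Hu).
  assert (E1 : a*b = x) by (apply Hu; [apply Hcl; auto| split; unfold idempotent in Hab; rewrite ?Hab; auto]).
  assert (E2 : b*a = x).
  { apply Hu; [apply Hcl; auto| split].
    - unfold idempotent in *. rnorm. rw Hib. rw Hia. rnorm in Hab. exact Hab.
    - unfold idempotent in *. rnorm. rw Hia. rw Hib. rnorm in Hba. exact Hba. }
  congruence.
Qed.

Section TAlg.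
Variable T : Semigroup.
Hypothesis HT : inverse_semigroup T.

Notation i := (@sinv T).
Implicit Types t u e f y : T.

Lemma inv_spec t : is_inverse t (i t).
Proof.
  unfold sinv. apply epsilon_spec. destruct HT as [_ H]. destruct (H t I) as (x&_&Hx&_). eauto.
Qed.

Lemma inv_uniq t y : is_inverse t y -> y = i t.
Proof.
  intros Hy. destruct HT as [_ H]. destruct (H t I) as (x&_&Hx&Hu).
  rewrite (Hu y I Hy). symmetry. apply Hu; [exact I| apply inv_spec].
Qed.

Lemma tit t : t * i t * t = t. Proof. apply inv_spec. Qed.
Lemma iti t : i t * t * i t = i t. Proof. apply inv_spec. Qed.

Lemma Tcomm e f : idempotent e -> idempotent f -> e*f = f*e.
Proof. intros. apply (inv_sub_comm T whole HT); auto; exact I. Qed.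

Lemma idem_r t : idempotent (t * i t).
Proof. unfold idempotent. rnorm. pose proof (iti t) as H. rw H. reflexivity. Qed.
Lemma idem_l t : idempotent (i t * t).
Proof. unfold idempotent. rnorm. pose proof (tit t) as H. rw H. reflexivity. Qed.

Lemma inv_inv t : i (i t) = t.
Proof. symmetry. apply inv_uniq. split; [apply iti | apply tit]. Qed.

Lemma inv_idem e : idempotent e -> i e = e.
Proof. intro He. symmetry. apply inv_uniq. unfold idempotent in He. split; rewrite ?He; auto. Qed.

Lemma inv_mul t u : i (t * u) = i u * i t.
Proof.
  symmetry. apply inv_uniq.
  pose proof (Tcomm _ _ (idem_r u) (idem_l t)) as C.
  split.
  - rnorm. transitivity (t * (u * i u * (i t * t)) * u). { rnorm; reflexivity. }
    rewrite C. rnorm. pose proof (tit t) as H1. pose proof (tit u) as H2. rw H1. rw H2. reflexivity.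
  - transitivity (i u * (i t * t * (u * i u)) * i t). { rnorm; reflexivity. }
    rewrite <- C. rnorm. pose proof (iti t) as H1. pose proof (iti u) as H2. rw H1. rw H2. reflexivity.
Qed.

Lemma idem_mul e f : idempotent e -> idempotent f -> idempotent (e*f).
Proof.
  intros He Hf. unfold idempotent in *.
  transitivity (e * (f * e) * f). { rnorm; reflexivity. }
  rewrite <- (Tcomm e f He Hf). rnorm. rw Hf. rw He. reflexivity.
Qed.
End TAlg.

Section Main.
Variable S : Semigroup.
Variable T : Semigroup.
Variable q : S -> T.
Hypothesis HS_li : locally_inverse S.
Hypothesis Hq_hom : homomorphism q.
Hypothesis Hq_surj : forall t : T, exists x, q x = t.
Hypothesis HT : inverse_semigroup T.
Hypothesis HCS : forall e : S, idempotent e -> completely_simple_sub (fun x => q x = q e).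

Notation i := (@sinv T).
Notation iS := (@sinv S).
Implicit Types t u v w f o : T.

Ltac qh := repeat rewrite Hq_hom.

Lemma S_inv (x : S) : is_inverse x (iS x).
Proof.
  unfold sinv. apply epsilon_spec. destruct HS_li as [Hreg _].
  destruct (Hreg x I) as (y&_&Hy). exists (y*x*y). split.
  - rnorm. rnorm in Hy. rw Hy. rw Hy. reflexivity.
  - rnorm. rnorm in Hy. rw Hy. rw Hy. reflexivity.
Qed.
Lemma xix (x : S) : x * iS x * x = x. Proof. apply S_inv. Qed.
Lemma ixi (x : S) : iS x * x * iS x = iS x. Proof. apply S_inv. Qed.

Lemma q_inv (x : S) : q (iS x) = i (q x).
Proof.
  apply inv_uniq; auto. split; rewrite <- !Hq_hom; f_equal; apply S_inv.
Qed.

Lemma xix_idem (x : S) : idempotent (x * iS x).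
Proof. unfold idempotent. rnorm. pose proof (ixi x) as H. rw H. reflexivity. Qed.

Lemma q_idem (e : S) : idempotent e -> idempotent (q e).
Proof. unfold idempotent. intro H. rewrite <- Hq_hom, H. reflexivity. Qed.

Lemma CSq f : idempotent f -> completely_simple_sub (fun z => q z = f).
Proof.
  intros Hf. destruct (Hq_surj f) as (z&Hz).
  assert (Hqe : q (z * iS z) = f).
  { qh. rewrite q_inv, Hz, (inv_idem T HT f Hf). exact Hf. }
  apply (CS_ext S (fun x => q x = q (z * iS z))).
  - apply HCS. apply xix_idem.
  - intro y. rewrite Hqe. tauto.
Qed.


Lemma phi_ex (e : S) f : idempotent e -> idempotent f -> f * q e = f ->
  exists ph, q ph = f /\ forall y, q y = f -> ph*y = e*y /\ y*ph = y*e.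
Proof.
  intros He Hf Hfe.
  pose proof (q_idem e He) as Ho.
  assert (Hef : q e * f = f) by (rewrite (Tcomm T HT _ _ Ho Hf); exact Hfe).
  pose proof (CSq f Hf) as HC.
  set (C := fun z => q z = f) in HC.
  assert (HeC : forall z, q z = f -> q (e*z*e) = f).
  { intros z Hz. qh. rewrite Hz, Hef, Hfe. reflexivity. }
  assert (HeL : forall z, q z = f -> q (e*z) = f) by (intros z Hz; qh; rewrite Hz; exact Hef).
  assert (HeR : forall z, q z = f -> q (z*e) = f) by (intros z Hz; qh; rewrite Hz; exact Hfe).
  assert (Hee : e * e = e) by exact He.
  set (G := fun z => q z = f /\ e*z = z /\ z*e = z).
  assert (HG : forall z, q z = f -> G (e*z*e)).
  { intros z Hz. split; [apply HeC; auto|split]; rnorm; rw Hee; reflexivity. }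
  assert (HGreg : forall z, G z -> exists k, G k /\ z*k*z = z).
  { intros z (Hz1&Hz2&Hz3). destruct (CS_reg' S C HC z Hz1) as (k&Ht&Hzt).
    exists (e*k*e). split. apply HG; exact Ht.
    transitivity ((z*e)*k*(e*z)). { rnorm; reflexivity. } rewrite Hz3, Hz2. exact Hzt. }
  assert (HGmul : forall a b, G a -> G b -> G (a*b)).
  { intros a b (Ha1&Ha2&Ha3) (Hb1&Hb2&Hb3). split; [qh; rewrite Ha1, Hb1; exact Hf|split].
    - rewrite sg_assoc, Ha2. reflexivity.
    - rewrite <- sg_assoc, Hb3. reflexivity. }
  destruct (Hq_surj f) as (c&Hc).
  destruct (HGreg (e*c*e) (HG c Hc)) as (k&Ht&Hzt).
  set (eps := e*c*e*k).
  assert (HepsG : G eps) by (apply HGmul; auto).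
  assert (Hepsi : eps * eps = eps).
  { unfold eps. transitivity (e*c*e*k*e*c*e*k). { rnorm; reflexivity. } rnorm. rnorm in Hzt. rw Hzt. reflexivity. }
  assert (Hloc : forall z, G z -> local_sub S e z).
  { intros z (_&Hz2&Hz3). exists z. rewrite Hz2, Hz3. reflexivity. }
  assert (Huniq : forall z, G z -> z*z = z -> z = eps).
  { intros z Hz Hzz.
    assert (Hcomm : eps*z = z*eps).
    { apply (inv_sub_comm S (local_sub S e) (proj2 HS_li e He)); auto. }
    destruct (CS_right' S C HC eps z (proj1 HepsG) (proj1 Hz)) as (s1&Hs1&E1).
    destruct (CS_right' S C HC z eps (proj1 Hz) (proj1 HepsG)) as (s2&Hs2&E2).
    assert (F1 : z*eps = eps).
    { transitivity (z*(eps*z*s1)). { rewrite E1. reflexivity. }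
      transitivity ((z*eps)*z*s1). { rnorm; reflexivity. }
      rewrite <- Hcomm. transitivity (eps*(z*z)*s1). { rnorm; reflexivity. }
      rewrite Hzz. exact E1. }
    assert (F2 : eps*z = z).
    { transitivity (eps*(z*eps*s2)). { rewrite E2. reflexivity. }
      transitivity ((eps*z)*eps*s2). { rnorm; reflexivity. }
      rewrite Hcomm. transitivity (z*(eps*eps)*s2). { rnorm; reflexivity. }
      rewrite Hepsi. exact E2. }
    congruence. }
  assert (Hid : forall z, G z -> eps*z = z /\ z*eps = z).
  { intros z Hz. destruct (HGreg z Hz) as (k'&Ht'&Hzt').
    assert (Hz1 : z*k' = eps).
    { apply Huniq. apply HGmul; auto. transitivity (z*k'*z*k'). { rnorm; reflexivity. } rewrite Hzt'. reflexivity. }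
    assert (Hz2 : k'*z = eps).
    { apply Huniq. apply HGmul; auto. transitivity (k'*(z*k'*z)). { rnorm; reflexivity. } rewrite Hzt'. reflexivity. }
    split.
    - rewrite <- Hz1. exact Hzt'.
    - rewrite <- Hz2. rewrite sg_assoc. exact Hzt'. }
  destruct HepsG as (Heps1&Heps2&Heps3).
  exists eps. split; [exact Heps1|]. intros y Hy. split.
  - set (c1 := e*y). assert (Hc1 : q c1 = f) by (apply HeL; auto).
    destruct (CS_right' S C HC c1 eps Hc1 Heps1) as (s1&Hs1&E1).
    assert (HG1 : G (c1*eps)).
    { split; [qh; rewrite Hc1, Heps1; exact Hf|split].
      - unfold c1. rewrite !sg_assoc, Hee. reflexivity.
      - rewrite <- sg_assoc, Heps3. reflexivity. }
    assert (E3 : eps*c1 = c1).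
    { transitivity (eps*(c1*eps*s1)). { rewrite E1. reflexivity. }
      transitivity ((eps*(c1*eps))*s1). { rnorm; reflexivity. }
      rewrite (proj1 (Hid _ HG1)). exact E1. }
    unfold c1 in E3. rewrite sg_assoc, Heps3 in E3. exact E3.
  - set (c1 := y*e). assert (Hc1 : q c1 = f) by (apply HeR; auto).
    destruct (CS_left' S C HC c1 eps Hc1 Heps1) as (s1&Hs1&E1).
    assert (HG1 : G (eps*c1)).
    { split; [qh; rewrite Hc1, Heps1; exact Hf|split].
      - rewrite sg_assoc, Heps2. reflexivity.
      - unfold c1. rewrite <- !sg_assoc, Hee. reflexivity. }
    assert (E3 : c1*eps = c1).
    { transitivity ((s1*eps*c1)*eps). { rewrite E1. reflexivity. }
      transitivity (s1*((eps*c1)*eps)). { rnorm; reflexivity. }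
      rewrite (proj2 (Hid _ HG1)). rewrite sg_assoc. exact E1. }
    unfold c1 in E3. rewrite <- sg_assoc, Heps2 in E3. exact E3.
Qed.


Definition phi (e : S) f : S :=
  epsilon (inhabits e) (fun ph => q ph = f /\ forall y, q y = f -> ph*y = e*y /\ y*ph = y*e).

Lemma phi_spec (e : S) f : idempotent e -> idempotent f -> f * q e = f ->
  q (phi e f) = f /\ forall y, q y = f -> phi e f * y = e*y /\ y * phi e f = y*e.
Proof.
  intros He Hf Hfe. unfold phi. apply epsilon_spec. apply phi_ex; auto.
Qed.

Definition rr f (x : S) : S := phi (x * iS x) f * x.

Lemma q_xix (x : S) : q (x * iS x) = q x * i (q x).
Proof. qh. rewrite q_inv. reflexivity. Qed.

Lemma rr_q f (x : S) : idempotent f -> f * (q x * i (q x)) = f -> q (rr f x) = f * q x.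
Proof.
  intros Hf Hfx. unfold rr. qh. rewrite (proj1 (phi_spec _ _ (xix_idem x) Hf ltac:(rewrite q_xix; exact Hfx))).
  reflexivity.
Qed.

Lemma rr_self (x : S) : rr (q x * i (q x)) x = x.
Proof.
  unfold rr. pose proof (idem_r T HT (q x)) as HE.
  destruct (phi_spec (x * iS x) (q x * i (q x)) (xix_idem x) HE ltac:(rewrite q_xix; exact HE)) as [H1 H2].
  destruct (H2 (x * iS x) (q_xix x)) as [H3 _].
  pose proof (xix_idem x) as Hi. unfold idempotent in Hi. rewrite Hi in H3.
  transitivity (phi (x * iS x) (q x * i (q x)) * (x * iS x) * x). { rnorm. pose proof (xix x) as H. rw H. reflexivity. }
  rewrite H3. apply xix.
Qed.


Lemma Emul_le (t u : T) : t * u * i (t * u) * (t * i t) = t * u * i (t * u).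
Proof.
  rewrite (inv_mul T HT). rnorm. pose proof (iti T HT t) as H. rw H. reflexivity.
Qed.

Lemma E_comm_l (t u : T) : t * u * i (t * u) * t = t * (u * i u).
Proof.
  rewrite (inv_mul T HT).
  transitivity (t * (u * i u * (i t * t))). { rnorm; reflexivity. }
  rewrite (Tcomm T HT _ _ (idem_r T HT u) (idem_l T HT t)). rnorm.
  pose proof (tit T HT t) as H. rw H. reflexivity.
Qed.

Lemma rr_mul (x y : S) f : idempotent f -> f * (q (x*y) * i (q (x*y))) = f ->
  rr f x * rr (i (q x) * f * q x) y = rr f (x*y).
Proof.
  intros Hf HfE.
  set (E := q (x*y) * i (q (x*y))) in *.
  assert (HEi : idempotent E) by apply idem_r, HT.
  assert (HEq : q (x*y) = q x * q y) by apply Hq_hom.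
  assert (HfEx : f * (q x * i (q x)) = f).
  { rewrite <- HfE at 1. unfold E. rewrite HEq. rnorm. pose proof (Emul_le (q x) (q y)) as H. rnorm in H.
    rw H. rnorm in HfE. unfold E in HfE. rewrite HEq in HfE. rnorm in HfE. exact HfE. }
  assert (HfEf : E * f = f) by (rewrite (Tcomm T HT _ _ HEi Hf); exact HfE).
  destruct (phi_spec (x * iS x) f (xix_idem x) Hf ltac:(rewrite q_xix; exact HfEx)) as [P1q P1].
  set (ph1 := phi (x * iS x) f) in *.
  set (h := i (q x) * f * q x).
  assert (Hh : idempotent h).
  { unfold h, idempotent. rnorm. transitivity (i (q x) * ((f * (q x * i (q x))) * (f * q x))). { rnorm; reflexivity. }
    rewrite HfEx. rnorm. unfold idempotent in Hf. rw Hf. reflexivity. }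
  assert (HhEy : h * (q y * i (q y)) = h).
  { unfold h. transitivity (i (q x) * f * (q x * (q y * i (q y)))). { rnorm; reflexivity. }
    rewrite <- (E_comm_l (q x) (q y)). rewrite <- HEq. fold E.
    transitivity (i (q x) * (f * E) * q x). { rnorm; reflexivity. } rewrite HfE. reflexivity. }
  destruct (phi_spec (y * iS y) h (xix_idem y) Hh ltac:(rewrite q_xix; exact HhEy)) as [P2q P2].
  set (ph2 := phi (y * iS y) h) in *.
  set (c := ph1 * x).
  assert (Hqc : q c = f * q x) by (unfold c; qh; rewrite P1q; reflexivity).
  assert (Hcc : q (iS c * c) = h).
  { qh. rewrite q_inv, Hqc, (inv_mul T HT), (inv_idem T HT f Hf). unfold h.
    transitivity (i (q x) * (f * f) * q x). { rnorm; reflexivity. } unfold idempotent in Hf. rewrite Hf. reflexivity. }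
  assert (StepA : c * ph2 = c * (y * iS y)).
  { transitivity (c * (iS c * c * ph2)). { rnorm. pose proof (xix c) as H. rw H. reflexivity. }
    rewrite (proj2 (P2 _ Hcc)). rnorm. pose proof (xix c) as H. rw H. reflexivity. }
  assert (L1 : rr f x * rr h y = ph1 * x * y).
  { unfold rr. fold ph1. fold ph2. fold c. rewrite sg_assoc, StepA. rnorm. pose proof (xix y) as H. rw H.
    unfold c. rnorm. reflexivity. }
  fold h. rewrite L1.
  set (d := x * y * iS (x * y)).
  assert (Hdi : idempotent d) by apply xix_idem.
  assert (Hqd : q d = E) by (unfold d; rewrite q_xix; reflexivity).
  destruct (phi_spec d f Hdi Hf ltac:(rewrite Hqd; exact HfE)) as [P3q P3].
  pose proof (CSq f Hf) as HC.
  assert (Hxd : x * iS x * d = d).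
  { unfold d. rnorm. pose proof (xix x) as H. rw H. reflexivity. }
  assert (U : ph1 * d = phi d f).
  { apply (CS_uniq' S (fun z => q z = f) HC).
    - qh. rewrite P1q, Hqd. exact HfE.
    - exact P3q.
    - intros z Hz. rewrite (proj1 (P3 z Hz)).
      assert (Hdz : q (d*z) = f) by (qh; rewrite Hqd, Hz; exact HfEf).
      rewrite <- sg_assoc, (proj1 (P1 _ Hdz)), sg_assoc, Hxd. reflexivity.
    - intros z Hz. rewrite (proj2 (P3 z Hz)). rewrite sg_assoc, (proj2 (P1 z Hz)).
      rewrite <- sg_assoc, Hxd. reflexivity. }
  unfold rr. fold d. rewrite <- U.
  transitivity (ph1 * (d * (x * y))). 2: { rnorm; reflexivity. }
  unfold d. rewrite (xix (x*y)). rnorm. reflexivity.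
Qed.


Record Trip := mkT { tw : T; tz : S; tu : T }.

Definition inK o (a : Trip) : Prop :=
  tw a * i (tw a) = o /\ tu a * i (tu a) = o /\ q (tz a) = i (tw a) * tu a.

Lemma inhS (t : T) : inhabited S.
Proof. destruct (Hq_surj t) as (x&_). exact (inhabits x). Qed.

Definition mm u u' : S := epsilon (inhS u) (fun m => q m = i u * u').
Lemma mm_spec u u' : q (mm u u') = i u * u'.
Proof. unfold mm. apply epsilon_spec. apply Hq_surj. Qed.

Definition jn u u' (x y : S) : S :=
  if excluded_middle_informative (u = u') then x * y else x * mm u u' * y.

Lemma jn_eq u (x y : S) : jn u u x y = x * y.
Proof. unfold jn. destruct (excluded_middle_informative (u = u)) as [_|C]; [reflexivity| now elim C]. Qed.

Definition tmul (a b : Trip) : Trip := mkT (tw a) (jn (tu a) (tw b) (tz a) (tz b)) (tu b).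

Lemma tmul_assoc a b c : tmul a (tmul b c) = tmul (tmul a b) c.
Proof.
  destruct a as [a1 a2 a3], b as [b1 b2 b3], c as [c1 c2 c3]. unfold tmul; simpl. f_equal.
  unfold jn. destruct (excluded_middle_informative (a3 = b1)), (excluded_middle_informative (b3 = c1));
    rnorm; reflexivity.
Qed.

Lemma iw_o w o : w * i w = o -> i w * o = i w.
Proof. intros H. rewrite <- H. rnorm. pose proof (iti T HT w) as H1. rnorm in H1. rw H1. reflexivity. Qed.

Lemma inK_mul o a b : idempotent o -> inK o a -> inK o b -> inK o (tmul a b).
Proof.
  intros Ho (Ha1&Ha2&Ha3) (Hb1&Hb2&Hb3). unfold inK, tmul; simpl. split; [exact Ha1|split; [exact Hb2|]].
  unfold jn. destruct (excluded_middle_informative (tu a = tw b)) as [E|E].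
  - qh. rewrite Ha3, Hb3, <- E. rnorm. rw Ha2. apply iw_o in Ha1. rw Ha1. reflexivity.
  - qh. rewrite Ha3, Hb3, mm_spec. rnorm. rw Ha2. rw Hb1. unfold idempotent in Ho. rw Ho. apply iw_o in Ha1. rw Ha1.
    reflexivity.
Qed.


Lemma Kfact o a b : idempotent o -> inK o a -> inK o b ->
  exists l r, inK o l /\ inK o r /\ b = tmul (tmul l a) r.
Proof.
  intros Ho (Ha1&Ha2&Ha3) (Hb1&Hb2&Hb3).
  destruct a as [w x u], b as [w' y u']; simpl in *.
  destruct (Hq_surj (i w' * w)) as (s0&Hs0).
  destruct (Hq_surj (i u * u')) as (t0&Ht0).
  set (c := s0 * x * t0).
  pose proof (iw_o w' o Hb1) as Iw'. pose proof (iw_o u' o Hb2) as Iu'.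
  assert (Ho' : o * o = o) by exact Ho.
  assert (Hqc : q c = i w' * u').
  { unfold c. qh. rewrite Hs0, Ha3, Ht0. rnorm. rw Ha1. rw Ha2. rw Ho'. rw Iw'. reflexivity. }
  set (R := i w' * u' * i (i w' * u')).
  assert (HR : idempotent R) by apply idem_r, HT.
  pose proof (CSq R HR) as HCR.
  assert (Hy : q (y * iS y) = R) by (rewrite q_xix, Hb3; reflexivity).
  assert (Hc' : q (c * iS c) = R) by (rewrite q_xix, Hqc; reflexivity).
  destruct (CS_fact' S _ HCR (c * iS c) (y * iS y) Hc' Hy) as (al&be&Hal&Hbe&Hyy).
  assert (HRe : R = i w' * u' * (i u' * w')).
  { unfold R. rewrite (inv_mul T HT), (inv_inv T HT). reflexivity. }
  exists (mkT w' (al * s0) w), (mkT u (t0 * iS c * be * y) u').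
  split; [|split].
  - unfold inK; simpl. split; [exact Hb1|split; [exact Ha1|]].
    qh. rewrite Hal, Hs0, HRe. rnorm. rw Hb2. rw Iw'. pose proof (iti T HT w') as H. rw H. reflexivity.
  - unfold inK; simpl. split; [exact Ha2|split; [exact Hb2|]].
    qh. rewrite q_inv, Ht0, Hqc, Hbe, Hb3, HRe. rewrite (inv_mul T HT), (inv_inv T HT). rnorm.
    rw Hb1. rw Iu'. pose proof (tit T HT u') as H. rw H. rw Hb1. rw Iu'. rw H. reflexivity.
  - unfold tmul; simpl. rewrite !jn_eq. f_equal.
    transitivity (y * iS y * y). { symmetry; apply xix. }
    rewrite Hyy. unfold c. rnorm. reflexivity.
Qed.


Definition Eidx := {j : T | idempotent j}.
Definition Kpred (F : T -> Eidx -> Trip) : Prop := forall v j, inK (proj1_sig j) (F v j).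
Definition KC := {F : T -> Eidx -> Trip | Kpred F}.

Definition Kmul (F G : KC) : KC :=
  exist Kpred (fun v j => tmul (proj1_sig F v j) (proj1_sig G v j))
    (fun v j => inK_mul _ _ _ (proj2_sig j) (proj2_sig F v j) (proj2_sig G v j)).

Lemma KC_eq (F G : KC) : (forall v j, proj1_sig F v j = proj1_sig G v j) -> F = G.
Proof.
  destruct F as [F HF], G as [G HG]. simpl. intros E.
  assert (F = G) by (apply functional_extensionality; intro v; apply functional_extensionality; intro j; apply E).
  subst G. f_equal. apply proof_irrelevance.
Qed.

Lemma Kassoc (F G H : KC) : Kmul F (Kmul G H) = Kmul (Kmul F G) H.
Proof. apply KC_eq. intros v j. simpl. apply tmul_assoc. Qed.

Definition Ksg : Semigroup := {| sg_car := KC; sg_op := Kmul; sg_assoc := Kassoc |}.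


Definition act (t : T) (F : Ksg) : Ksg :=
  exist Kpred (fun v j => proj1_sig F (v * t) j) (fun v j => proj2_sig F (v * t) j).

Lemma act_action : action act.
Proof.
  split.
  - intros t F G. apply KC_eq. intros v j. reflexivity.
  - intros t u F. apply KC_eq. intros v j. simpl. rewrite sg_assoc. reflexivity.
Qed.

Definition pr (o : T) : S := epsilon (inhS o) (primitive_idem_sub (fun z => q z = o)).
Lemma pr_spec o : idempotent o -> primitive_idem_sub (fun z => q z = o) (pr o).
Proof.
  intros Ho. unfold pr. apply epsilon_spec. destruct (CSq o Ho) as (_&_&p&Hp). eauto.
Qed.

Definition pad (o : T) : Trip := mkT o (pr o) o.
Lemma pad_in o : idempotent o -> inK o (pad o).
Proof.
  intros Ho. unfold inK, pad; simpl. rewrite (inv_idem T HT o Ho).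
  destruct (pr_spec o Ho) as (H1&_). unfold idempotent in Ho. rewrite Ho. repeat split; auto.
Qed.

Lemma pad_idem o : idempotent o -> tmul (pad o) (pad o) = pad o.
Proof.
  intros Ho. unfold tmul, pad; simpl. rewrite jn_eq. f_equal. apply (proj1 (proj2 (pr_spec o Ho))).
Qed.

Definition KP : Ksg := exist Kpred (fun v j => pad (proj1_sig j)) (fun v j => pad_in _ (proj2_sig j)).

Lemma K_cs : completely_simple Ksg.
Proof.
  split; [|split].
  - intros x y _ _. exact I.
  - intros I0 [_ HI] (A0&HA0) B _.
    assert (Hch : forall v (j : Eidx), exists lr : Trip * Trip,
      inK (proj1_sig j) (fst lr) /\ inK (proj1_sig j) (snd lr) /\
      proj1_sig B v j = tmul (tmul (fst lr) (proj1_sig A0 v j)) (snd lr)).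
    { intros v j. destruct (Kfact (proj1_sig j) _ _ (proj2_sig j) (proj2_sig A0 v j) (proj2_sig B v j))
        as (l&r&Hl&Hr&E). exists (l, r). auto. }
    set (g := fun v j => proj1_sig (constructive_indefinite_description _ (Hch v j))).
    assert (Hg : forall v j, inK (proj1_sig j) (fst (g v j)) /\ inK (proj1_sig j) (snd (g v j)) /\
      proj1_sig B v j = tmul (tmul (fst (g v j)) (proj1_sig A0 v j)) (snd (g v j))).
    { intros v j. unfold g. apply (proj2_sig (constructive_indefinite_description _ (Hch v j))). }
    set (L := exist Kpred (fun v j => fst (g v j)) (fun v j => proj1 (Hg v j)) : Ksg).
    set (R := exist Kpred (fun v j => snd (g v j)) (fun v j => proj1 (proj2 (Hg v j))) : Ksg).
    assert (EB : B = L * A0 * R).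
    { apply KC_eq. intros v j. simpl. apply (Hg v j). }
    rewrite EB. apply (HI R). exact I. apply (HI L). exact I. exact HA0.
  - exists KP. split; [exact I|split].
    + apply KC_eq. intros v j. simpl. apply pad_idem. apply proj2_sig.
    + intros G _ HG HGP HPG. apply KC_eq. intros v j.
      assert (E1 := f_equal (fun F : Ksg => proj1_sig F v j) HGP). simpl in E1.
      assert (E2 := f_equal (fun F : Ksg => proj1_sig F v j) HPG). simpl in E2.
      assert (E3 := f_equal (fun F : Ksg => proj1_sig F v j) HG). simpl in E3.
      pose proof (proj2_sig G v j) as Hin. simpl in *.
      destruct j as [o Ho]. simpl in *.
      set (g := proj1_sig G v (exist _ o Ho)) in *.
      assert (Hu := f_equal tu E1). assert (Hw := f_equal tw E2).
      assert (Z1 := f_equal tz E1). assert (Z2 := f_equal tz E2). assert (Z3 := f_equal tz E3).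
      unfold tmul, pad in *; simpl in *.
      rewrite <- Hu in Z1, Z3. rewrite <- Hw in Z2, Z3. rewrite !jn_eq in Z1, Z2, Z3.
      destruct Hin as (_&_&Hq). rewrite <- Hw, <- Hu, (inv_idem T HT o Ho) in Hq. unfold idempotent in Ho. rewrite Ho in Hq.
      destruct g as [gw gz gu]; simpl in *. subst gw gu.
      f_equal. destruct (pr_spec o Ho) as (_&_&Hp). apply Hp; auto.
Qed.


Definition G0 (x : S) w o : Trip :=
  if excluded_middle_informative (o = w * i w) then mkT w (rr (i w * w) x) (w * q x) else pad o.

Lemma lvl_eq (x : S) w : w * (q x * i (q x)) = w -> w * q x * i (w * q x) = w * i w.
Proof.
  intros Hw. rewrite (inv_mul T HT). rnorm. rnorm in Hw. rw Hw. reflexivity.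
Qed.

Lemma G0_in (x : S) w o : idempotent o -> w * (q x * i (q x)) = w -> inK o (G0 x w o).
Proof.
  intros Ho Hw. unfold G0. destruct (excluded_middle_informative (o = w * i w)) as [E|E].
  - unfold inK; simpl. split; [symmetry; exact E|split].
    + rewrite lvl_eq by exact Hw. symmetry; exact E.
    + rewrite rr_q.
      * rnorm. reflexivity.
      * apply idem_l, HT.
      * rnorm. rnorm in Hw. rw Hw. reflexivity.
  - apply pad_in; exact Ho.
Qed.

Lemma Eidem_r v t : v * (t * i t) * (t * i t) = v * (t * i t).
Proof. rewrite <- sg_assoc. pose proof (idem_r T HT t) as H. unfold idempotent in H. rewrite H. reflexivity. Qed.

Definition Fx (x : S) : Ksg :=
  exist Kpred (fun v j => G0 x (v * (q x * i (q x))) (proj1_sig j))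
    (fun v j => G0_in x _ _ (proj2_sig j) (Eidem_r v (q x))).

Definition psi (x : S) : Ksg * T := (Fx x, q x).

Lemma psi_mem x : lsd_mem act (psi x).
Proof.
  unfold lsd_mem, psi; simpl. apply KC_eq. intros v j. simpl. rewrite Eidem_r. reflexivity.
Qed.

Lemma G0_mul (x y : S) W o : idempotent o -> W * (q (x*y) * i (q (x*y))) = W ->
  G0 (x*y) W o = tmul (G0 x W o) (G0 y (W * q x) o).
Proof.
  intros Ho HW.
  assert (HWx : W * (q x * i (q x)) = W).
  { rewrite <- HW at 1. rewrite Hq_hom. rewrite <- sg_assoc, Emul_le. rewrite <- Hq_hom. exact HW. }
  unfold G0. rewrite (lvl_eq x W HWx).
  destruct (excluded_middle_informative (o = W * i W)) as [E|E].
  - unfold tmul; simpl. rewrite jn_eq. f_equal.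
    + rewrite (inv_mul T HT).
      transitivity (rr (i W * W) x * rr (i (q x) * (i W * W) * q x) y). 2: { rnorm. reflexivity. }
      symmetry. apply rr_mul.
      * apply idem_l, HT.
      * rnorm. rnorm in HW. rw HW. reflexivity.
    + rewrite Hq_hom. rnorm. reflexivity.
  - symmetry. apply pad_idem; exact Ho.
Qed.

Lemma psi_hom x y : psi (x*y) = lsd_mul act (psi x) (psi y).
Proof.
  unfold psi, lsd_mul; simpl. f_equal; [|apply Hq_hom].
  apply KC_eq. intros v j. simpl.
  assert (A1 : v * (q x * q y * i (q x * q y)) * (q x * i (q x)) = v * (q x * q y * i (q x * q y)))
    by (rewrite <- sg_assoc, Emul_le; reflexivity).
  assert (A2 : v * q x * (q y * i (q y)) = v * (q x * q y * i (q x * q y)) * q x)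
    by (rewrite <- (sg_assoc _ v _ (q x)), E_comm_l; rnorm; reflexivity).
  rewrite A1, A2, <- Hq_hom.
  apply G0_mul. apply proj2_sig.
  rewrite <- sg_assoc. pose proof (idem_r T HT (q (x*y))) as H. unfold idempotent in H. rewrite H. reflexivity.
Qed.

Lemma psi_inj x y : psi x = psi y -> x = y.
Proof.
  intros H. unfold psi in H.
  assert (Hq : q x = q y) by exact (f_equal snd H).
  assert (HF := f_equal (fun p : Ksg * T => proj1_sig (fst p) (q x * i (q x)) (exist _ _ (idem_r T HT (q x)))) H).
  simpl in HF. rewrite <- Hq in HF. rewrite (idem_r T HT (q x)) in HF.
  unfold G0 in HF. rewrite <- Hq in HF.
  set (Ex := q x * i (q x)) in *.
  assert (HEx : idempotent Ex) by apply idem_r, HT.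
  assert (Hl : Ex = Ex * i Ex) by (rewrite (inv_idem T HT Ex HEx); symmetry; exact HEx).
  destruct (excluded_middle_informative (Ex = Ex * i Ex)) as [_|C]; [|now elim C].
  assert (HZ := f_equal tz HF). simpl in HZ.
  rewrite (inv_idem T HT Ex HEx), HEx in HZ.
  unfold Ex in HZ. rewrite rr_self in HZ. rewrite Hq in HZ. rewrite rr_self in HZ. exact HZ.
Qed.

End Main.

Theorem theorem3p1 (S : Semigroup) (rho : S -> S -> Prop)
  (T : Semigroup) (q : S -> T)
  (HS_solid : E_solid S) (HS_li : locally_inverse S)
  (Hrho : congruence rho)
  (Hq_hom : homomorphism q) (Hq_surj : forall t : T, exists x, q x = t)
  (Hq_ker : forall x y, rho x y <-> q x = q y)
  (HT : inverse_semigroup T)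
  (Hclasses : forall e : S, idempotent e -> completely_simple_sub (fun x => rho x e)) :
  exists (K : Semigroup) (act : T -> K -> K),
    completely_simple K /\ action act /\
    exists psi : S -> K * T,
      (forall x, lsd_mem act (psi x)) /\
      (forall x y, psi (x * y) = lsd_mul act (psi x) (psi y)) /\
      (forall x y, psi x = psi y -> x = y) /\
      (forall x y, rho x y <-> snd (psi x) = snd (psi y)).
Proof.
  assert (HCS : forall e, idempotent e -> completely_simple_sub (fun x => q x = q e)).
  { intros e He. apply (CS_ext S (fun x => rho x e)); [apply Hclasses; auto| intro z; apply Hq_ker]. }
  exists (Ksg S T q Hq_hom Hq_surj HT), (act S T q Hq_hom Hq_surj HT).
  split; [apply (K_cs S T q HS_li Hq_hom Hq_surj HT HCS)|split; [apply act_action|]].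
  exists (psi S T q HS_li Hq_hom Hq_surj HT HCS).
  split; [apply psi_mem|split; [apply psi_hom|split; [apply psi_inj|]]].
  intros x y. rewrite Hq_ker. unfold psi; simpl. tauto.
Qed.
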